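(* Let $\mathcal{X}$ be a Banach space, $\epsilon>0$, $P\in\mathcal{B}(\mathcal{X})$ a projection with $\|P\|_\infty=1$, and $[0,\epsilon]\ni t\mapsto P(t)\in\mathcal{B}(\mathcal{X})$, $[0,\epsilon]\ni t\mapsto C(t)\in\mathcal{B}(\mathcal{X})$ two maps such that, for some $v,w\ge0$ and all $t\in[0,\epsilon]$, $P(t)^2=P(t)$, $P(t)C(t)=C(t)P(t)=C(t)$, $\|P(t)-P\|_\infty\le tv$ and $\|C(t)-P(t)\|_\infty\le tw$. Then for all $n\in\mathbb{N}$ with $\frac1n\in[0,\epsilon]$, $$\Big\|C(\tfrac1n)^n-e^{n(C(\frac1n)-P(\frac1n))}P(\tfrac1n)\Big\|_\infty\le\frac n2e^{v+w}\Big\|\big(C(\tfrac1n)-P(\tfrac1n)\big)^2\Big\|_\infty\le\frac{w^2}{2n}e^{v+w}.$$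
   Context: $\mathcal{B}(\mathcal{X})$: bounded operators with operator norm $\|\cdot\|_\infty$; a projection is a bounded idempotent; exponentials of bounded operators are defined by power series. *)

(* Defs.v *)
From HB Require Import structures.
From mathcomp Require Import all_boot all_order all_algebra.
From mathcomp Require Import all_classical all_reals all_analysis.
Set Implicit Arguments. Unset Strict Implicit. Unset Printing Implicit Defensive.
Import Order.TTheory GRing.Theory Num.Theory.
Import numFieldNormedType.Exports.
Local Open Scope classical_set_scope.
Local Open Scope ring_scope.

(* Operators on a (real) normed space X are represented as functions X -> X.
   B(X) = bounded linear operators. *)
Definition bounded_op (R : realType) (X : normedModType R) (A : X -> X) : Prop :=
  (forall x y : X, A (x + y) = A x + A y) /\
  (forall (a : R) (x : X), A (a *: x) = a *: A x) /\
  (exists M : R, forall x : X, `|A x| <= M * `|x|).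

Definition opnorm (R : realType) (X : normedModType R) (A : X -> X) : R :=
  sup [set r : R | exists x : X, `|x| <= 1 /\ r = `|A x|].

(* operator exponential, defined by the power series sum_k A^k / k!
   (evaluated at x; the operator-norm convergent series has this value) *)
Definition expop (R : realType) (X : completeNormedModType R) (A : X -> X) (x : X) : X :=
  lim ((fun N : nat => \sum_(k < N) ((k`!)%:R^-1 : R) *: iter k A x) @ \oo).

(* Main.v *)
Require Import Defs.
From HB Require Import structures.
From mathcomp Require Import all_boot all_order all_algebra zify ring lra.
From mathcomp Require Import all_classical all_reals all_analysis.
Import Order.TTheory GRing.Theory Num.Theory.
Import numFieldNormedType.Exports.
Lemma ffact_le_exp n k : (n ^_ k <= n ^ k)%N.
Proof.
elim: k => [|k IH]; first by rewrite ffactn0 expn0.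
by rewrite ffactnSr expnS mulnC leq_mul // leq_subr.
Qed.

Lemma ffact_gap n k : (2 * n ^ k.+1 <= 2 * n ^_ k.+1 + n ^ k * (k.+1 * k))%N.
Proof.
elim: k => [|k IH]; first by rewrite ffactn1 expn0 expn1 muln0 addn0.
have L := ffact_le_exp n k.+1.
rewrite ffactnSr.
move: IH L; rewrite !expnS.
set N := n ^ k; set F := n ^_ k.+1 => IH L.
have [le|lt] := leqP k.+1 n.
  have e : n = (n - k.+1) + k.+1 by rewrite subnK.
  move: (n - k.+1) e => m e.
  have H1 : (n * (2 * (n * N)) <= n * (2 * F + N * (k.+1 * k)))%N by rewrite leq_mul2l IH orbT.
  nia.
have -> : (n - k.+1 = 0)%N by apply/eqP; rewrite subn_eq0 ltnW.
nia.
Qed.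

Local Open Scope classical_set_scope.
Local Open Scope ring_scope.
Section Op.
Variables (R : realType) (X : normedModType R).

Lemma bop0 (A : X -> X) : bounded_op A -> A 0 = 0.
Proof.
move=> [hadd _]; apply: (addrI (A 0)); by rewrite addr0 -hadd addr0.
Qed.

Lemma opnorm_ub (A : X -> X) x : bounded_op A -> `|x| <= 1 -> `|A x| <= opnorm A.
Proof.
move=> hA hx; have [_ [_ [M hM]]] := hA.
apply: (ub_le_sup); last by exists x.
exists `|M| => r [y [hy ->]].
apply: (le_trans (hM y)); apply: (le_trans (y := `|M| * `|y|)).
  by apply: ler_wpM2r => //; apply: ler_norm.
by rewrite -[leRHS]mulr1; apply: ler_wpM2l.
Qed.

Lemma opnorm_ge0 (A : X -> X) : bounded_op A -> 0 <= opnorm A.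
Proof. by move=> hA; apply: le_trans (normr_ge0 (A 0)) _; apply: opnorm_ub; rewrite ?normr0. Qed.

Lemma opnorm_le (A : X -> X) K : (forall x, `|x| <= 1 -> `|A x| <= K) -> opnorm A <= K.
Proof.
move=> h; apply: ge_sup; first by exists `|A 0|, 0; rewrite normr0.
by move=> r [y [hy ->]]; apply: h.
Qed.

Lemma opnorm_bound (A : X -> X) x : bounded_op A -> `|A x| <= opnorm A * `|x|.
Proof.
move=> hA; have [x0|x0] := eqVneq x 0.
  by rewrite x0 bop0 // !normr0 mulr0.
have nx : 0 < `|x| by rewrite normr_gt0.
have := @opnorm_ub A (`|x|^-1 *: x) hA.
rewrite normrZ normfV normr_id mulVf ?gt_eqF // lexx => /(_ isT).
have [_ [hs _]] := hA; rewrite hs normrZ normfV normr_id.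
by rewrite ler_pdivrMl // mulrC.
Qed.

Lemma bop_sub (A B : X -> X) : bounded_op A -> bounded_op B -> bounded_op (fun x => A x - B x).
Proof.
move=> [aA [sA [MA hA]]] [aB [sB [MB hB]]]; split; [|split].
- by move=> x y; rewrite aA aB opprD addrACA.
- by move=> a x; rewrite sA sB scalerBr.
- exists (MA + MB) => x; rewrite mulrDl; apply: (le_trans (ler_normB _ _)).
  exact: lerD.
Qed.

Lemma bop_comp (A B : X -> X) : bounded_op A -> bounded_op B -> bounded_op (fun x => A (B x)).
Proof.
move=> hA hB; have [aA [sA _]] := hA; have [aB [sB _]] := hB; split; [|split].
- by move=> x y; rewrite aB aA.
- by move=> a x; rewrite sB sA.
- exists (opnorm A * opnorm B) => x; apply: (le_trans (@opnorm_bound A (B x) hA)).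
  rewrite -mulrA; apply: ler_wpM2l; first exact: opnorm_ge0.
  exact: opnorm_bound.
Qed.
End Op.

Section Op2.
Variables (R : realType) (X : normedModType R).

Lemma bop_opp (A : X -> X) y : bounded_op A -> A (- y) = - A y.
Proof.
move=> hA; have [hadd _] := hA; apply: (addrI (A y)).
by rewrite -hadd !subrr bop0.
Qed.

Lemma bop_sum (A : X -> X) N (F : 'I_N -> X) : bounded_op A ->
  A (\sum_(k < N) F k) = \sum_(k < N) A (F k).
Proof.
move=> hA; have [hadd _] := hA.
apply: (big_ind2 (fun a b => A a = b)) => //; first exact: bop0.
by move=> a b c d <- <-; rewrite hadd.
Qed.

Lemma bop_scale (A : X -> X) (c : R) y : bounded_op A -> A (c *: y) = c *: A y.
Proof. by move=> [_ [hs _]]. Qed.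

Lemma iter_bound (A : X -> X) k z : bounded_op A ->
  `|iter k A z| <= opnorm A ^+ k * `|z|.
Proof.
move=> hA; elim: k => [|k IH]; first by rewrite expr0 mul1r.
rewrite iterS; apply: (le_trans (@opnorm_bound _ _ A _ hA)).
by rewrite exprS -mulrA; apply: ler_wpM2l => //; apply: opnorm_ge0.
Qed.
End Op2.

Lemma exp_partial (R : realType) (w : R) N : 0 <= w ->
  \sum_(j < N) w ^+ j / j`!%:R <= expR w.
Proof.
move=> w0.
have := @nondecreasing_cvgn_le R (series (exp_coeff w)) _ (is_cvg_series_exp_coeff w) N.
  rewrite /series /= big_mkord; apply.
apply: nondecreasing_series => k _ _; exact: exp_coeff_ge0.
Qed.

Lemma coef_bound (R : realType) n j :
  `| ('C(n, j.+2))%:R - ((j.+2)`!%:R^-1 * n%:R ^+ j.+2) | <= n%:R ^+ j.+1 / (2 * j`!%:R) :> R.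
Proof.
have q0 : 0 < j`!%:R :> R by rewrite ltr0n fact_gt0.
have f0 : (j.+2)`!%:R != 0 :> R by rewrite pnatr_eq0 -lt0n fact_gt0.
have hb : ('C(n,j.+2)%:R : R) = (n ^_ j.+2)%:R / (j.+2)`!%:R.
  by rewrite -bin_ffact natrM mulfK.
have hle : (n ^_ j.+2)%:R <= (n%:R ^+ j.+2 : R) by rewrite -natrX ler_nat ffact_le_exp.
have gap : (2 * n%:R^+j.+2 <= 2 * (n^_j.+2)%:R + n%:R^+j.+1 * ((j.+2)%:R * (j.+1)%:R) :> R).
  by rewrite -!natrX -!natrM -natrD ler_nat ffact_gap.
rewrite hb.
have fp : 0 < (j.+2)`!%:R :> R by rewrite ltr0n fact_gt0.
have -> : `|(n ^_ j.+2)%:R / (j.+2)`!%:R - (j.+2)`!%:R^-1 * n%:R ^+ j.+2|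
   = (n%:R ^+ j.+2 - (n ^_ j.+2)%:R) / (j.+2)`!%:R :> R.
  rewrite [_^-1 * _]mulrC -mulrBl normrM normfV (gtr0_norm fp).
  by rewrite (ler0_norm (x := _ - _)) ?subr_le0 // opprB.
rewrite ler_pdivrMr //.
move: hle gap; set F := (n ^_ j.+2)%:R => hle gap.
rewrite !factS !natrM.
have -> : n%:R ^+ j.+1 / (2 * j`!%:R) * ((j.+2)%:R * ((j.+1)%:R * j`!%:R))
   = n%:R ^+ j.+1 * ((j.+2)%:R * (j.+1)%:R) / 2 :> R.
  by field; rewrite gt_eqF.
lra.
Qed.

Section Main.
Variables (R : realType) (X : completeNormedModType R).
Variables (P C D : X -> X).
Hypotheses (hP : bounded_op P) (hC : bounded_op C)
  (PP : forall x, P (P x) = P x) (PC : forall x, P (C x) = C x)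
  (CP : forall x, C (P x) = C x) (hD : forall x, D x = C x - P x).

Lemma hDb : bounded_op D.
Proof.
have -> : D = (fun x => C x - P x) by apply/funext => x; exact: hD.
exact: bop_sub.
Qed.

Lemma DP x : D (P x) = D x. Proof. by rewrite !hD CP PP. Qed.
Lemma PD x : P (D x) = D x.
Proof. have [hadd _] := hP; by rewrite hD hadd bop_opp // PC PP. Qed.
Lemma CPD z : C z = P z + D z. Proof. by rewrite hD addrCA subrr addr0. Qed.

Lemma PiterD k y : P (iter k D (P y)) = iter k D (P y).
Proof. case: k => [|k]; first exact: PP. by rewrite iterS PD. Qed.

Lemma iterCP m x : (0 < m)%N -> iter m C x = iter m C (P x).
Proof. by case: m => // m _; rewrite !iterSr CP. Qed.

Lemma iter_nD (c : R) k y : iter k (fun z => c *: D z) y = c ^+ k *: iter k D y.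
Proof.
elim: k => [|k IH]; first by rewrite expr0 scale1r.
have hd := hDb.
by rewrite !iterS IH bop_scale // scalerA exprS.
Qed.

Lemma binom_exp y m N : (m < N)%N ->
  iter m C (P y) = \sum_(k < N) 'C(m, k)%:R *: iter k D (P y).
Proof.
have hd := hDb.
elim: m N => [|m IH] N hN.
  case: N hN => // N _; rewrite big_ord_recl /= bin0 scale1r big1 ?addr0 // => i _.
  by rewrite bin0n /bump leq0n add1n scale0r.
case: N hN => // N hN.
rewrite iterS (IH N.+1 (ltnW hN)).
have E1 : P (\sum_(k < N.+1) 'C(m, k)%:R *: iter k D (P y))
    = \sum_(k < N.+1) 'C(m, k)%:R *: iter k D (P y).
  by rewrite bop_sum //; apply: eq_bigr => k _; rewrite bop_scale // PiterD.
have E2 : D (\sum_(k < N.+1) 'C(m, k)%:R *: iter k D (P y))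
    = \sum_(k < N.+1) 'C(m, k)%:R *: iter k.+1 D (P y).
  by rewrite bop_sum //; apply: eq_bigr => k _; rewrite bop_scale // iterS.
rewrite CPD E1 E2.
rewrite [RHS]big_ord_recl [in LHS]big_ord_recl.
rewrite [X in _ + X = _]big_ord_recr.
have hmN : (m < N)%N by [].
rewrite (bin_small hmN) scale0r Monoid.mulm1.
rewrite !bin0.
under [in RHS]eq_bigr => i _ do rewrite lift0 binS natrD scalerDl.
under [in LHS]eq_bigr => i _ do rewrite lift0.
by rewrite big_split /= addrA.
Qed.

Lemma main_bound (n : nat) (w : R) x : (0 < n)%N -> 0 <= w ->
  opnorm D <= n%:R^-1 * w ->
  `|iter n C x - expop (fun y => n%:R *: D y) (P x)|
    <= n%:R / 2 * expR w * opnorm (fun z => D (D z)) * `|x|.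
Proof.
move=> n0 w0 hDw.
have hd := hDb.
have a0 : 0 <= opnorm D := @opnorm_ge0 _ _ D hd.
have hDD : bounded_op (fun z => D (D z)) := @bop_comp _ _ D D hd hd.
have dd0 : 0 <= opnorm (fun z => D (D z)) := @opnorm_ge0 _ _ _ hDD.
set a := opnorm D in a0 hDw *.
set dd := opnorm (fun z => D (D z)) in dd0 *.
set u := fun k : nat => k`!%:R^-1 *: iter k (fun y => n%:R *: D y) (P x).
set S := fun N : nat => \sum_(k < N) u k.
have SE : S = series u by apply/funext => N; rewrite /series /= big_mkord.
have Scvg : cvgn S.
  rewrite SE; apply: normed_cvg.
  apply: (@series_le_cvg _ _ (`|P x| *: exp_coeff (n%:R * a))).
  - by move=> k /=.
  - by move=> k; rewrite /= mulr_ge0 // exp_coeff_ge0 // mulr_ge0.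
  - move=> k; rewrite /u /= iter_nD normrZ normrZ.
    have -> : (`|P x| *: exp_coeff (n%:R * a)) k = `|P x| * ((n%:R * a)^+k / k`!%:R) by [].
    rewrite ger0_norm ?invr_ge0 ?ler0n // ger0_norm ?exprn_ge0 ?ler0n //.
    have hb := @iter_bound _ _ D k (P x) hd.
    rewrite [X in _ <= X](_ : _ = k`!%:R^-1 * (n%:R^+k * (a^+k * `|P x|))); last first.
      by rewrite exprMn; ring.
    by apply: ler_wpM2l; [rewrite invr_ge0 ler0n | apply: ler_wpM2l; [exact: exprn_ge0|]].
  - exact: is_cvg_seriesZ (is_cvg_series_exp_coeff _).
set B := n%:R / 2 * expR w * dd * `|x|.
have B0 : 0 <= B.
  by rewrite /B !mulr_ge0 // ?invr_ge0 ?ler0n // expR_ge0.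
have key : \forall N \near \oo, `|iter n C x - S N| <= B.
  exists n.+1 => // N /= hN.
  rewrite (@iterCP n x n0) (@binom_exp x n N hN) /S /u -sumrB.
  under eq_bigr => k _ do rewrite iter_nD scalerA -scalerBl.
  apply: le_trans (ler_norm_sum _ _ _) _.
  under eq_bigr => k _ do rewrite normrZ.
  have [N' ->] : exists N', N = N'.+2 by exists (N - 2)%N; lia.
  rewrite !big_ord_recl.
  rewrite [X in X + _](_ : _ = 0); last first.
    rewrite /= bin0 ?fact0 expr0 ?invr1 mulr1 subrr normr0 mul0r //.
  rewrite [X in _ + (X + _)](_ : _ = 0); last first.
    rewrite lift0 /= bin1 expr1 ?fact0 ?muln1 ?invr1 mul1r subrr normr0 mul0r //.
  rewrite add0r add0r.
  under eq_bigr => i _ do rewrite !lift0.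
  have nz : n%:R != 0 :> R by rewrite pnatr_eq0 -lt0n.
  apply: (@le_trans _ _ (\sum_(i < N') (n%:R / 2 * dd * `|x|) * (w ^+ i / i`!%:R))).
    apply: ler_sum => i _.
    have hb : `|iter i.+2 D (P x)| <= dd * (a ^+ i * `|x|).
      rewrite iterSr DP -iterSr !iterS.
      apply: (le_trans (@opnorm_bound _ _ _ _ hDD)).
      by apply: ler_wpM2l => //; apply: iter_bound.
    have ha : a ^+ i <= (n%:R^-1 * w) ^+ i.
      by apply: lerXn2r; rewrite // nnegrE ?mulr_ge0 ?invr_ge0 ?ler0n.
    apply: (le_trans (ler_pM (normr_ge0 _) (normr_ge0 _) (coef_bound R n i) hb)).
    apply: (@le_trans _ _ (n%:R ^+ i.+1 / (2 * i`!%:R) * (dd * ((n%:R^-1 * w) ^+ i * `|x|)))).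
      apply: ler_wpM2l; first by rewrite divr_ge0 ?exprn_ge0 ?mulr_ge0 ?ler0n.
      by apply: ler_wpM2l => //; apply: ler_wpM2r.
    have fz : i`!%:R != 0 :> R by rewrite pnatr_eq0 -lt0n fact_gt0.
    rewrite le_eqVlt; apply/orP; left; apply/eqP.
    rewrite exprMn exprVn exprS.
    field.
    by rewrite fz expf_neq0.
  rewrite -mulr_sumr /B.
  rewrite [X in _ <= X](_ : _ = n%:R / 2 * dd * `|x| * expR w); last by ring.
  apply: ler_wpM2l; first by rewrite !mulr_ge0 ?invr_ge0 ?ler0n.
  exact: exp_partial.
have expE : expop (fun y => n%:R *: D y) (P x) = lim (S @ \oo) by [].
rewrite expE.
apply/ler_addgt0Pr => e e0.
have Be : 0 < B + e by lra.
have : closed_ball (iter n C x) (B + e) (lim (S @ \oo)).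
  apply: (@closed_cvg _ _ \oo _ S); [exact: closed_ball_closed| |exact: Scvg].
  move: key; apply: filterS => N hN.
  rewrite closed_ballE //= /closed_ball_ /=.
  lra.
by rewrite closed_ballE //= /closed_ball_ /=.
Qed.
End Main.

Theorem lemmaC1 (R : realType) (X : completeNormedModType R) (eps : R)
  (P : X -> X) (Pt Ct : R -> X -> X) (v w : R) :
  0 < eps ->
  bounded_op P -> (forall x, P (P x) = P x) -> opnorm P = 1 ->
  0 <= v -> 0 <= w ->
  (forall t, 0 <= t <= eps ->
     bounded_op (Pt t) /\ bounded_op (Ct t) /\
     (forall x, Pt t (Pt t x) = Pt t x) /\
     (forall x, Pt t (Ct t x) = Ct t x) /\
     (forall x, Ct t (Pt t x) = Ct t x) /\
     opnorm (fun x => Pt t x - P x) <= t * v /\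
     opnorm (fun x => Ct t x - Pt t x) <= t * w) ->
  forall n : nat, (0 < n)%N -> 0 <= (n%:R^-1 : R) <= eps ->
  let t := (n%:R^-1 : R) in
  let D := fun x => Ct t x - Pt t x in
  opnorm (fun x => iter n (Ct t) x - expop (fun y => n%:R *: D y) (Pt t x))
    <= n%:R / 2 * expR (v + w) * opnorm (fun x => D (D x))
  /\ n%:R / 2 * expR (v + w) * opnorm (fun x => D (D x))
    <= w ^+ 2 / (2 * n%:R) * expR (v + w).
Proof.
move=> eps0 hP PP opP v0 w0 H n n0 hn t D.
have [hPt [hCt [PPt [PCt [CPt [hv hw]]]]]] := H t hn.
have hDb : bounded_op D := @bop_sub _ _ (Ct t) (Pt t) hCt hPt.
have hDD : bounded_op (fun x => D (D x)) := @bop_comp _ _ D D hDb hDb.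
have dd0 : 0 <= opnorm (fun x => D (D x)) := @opnorm_ge0 _ _ _ hDD.
have a0 : 0 <= opnorm D := @opnorm_ge0 _ _ _ hDb.
have hw' : opnorm D <= n%:R^-1 * w := hw.
have nz : 0 < n%:R :> R by rewrite ltr0n.
have E0 : 0 <= expR (v + w) := expR_ge0 _.
have Ew : expR w <= expR (v + w) by rewrite ler_expR lerDr.
split.
  apply: opnorm_le => x hx.
  have := @main_bound R X (Pt t) (Ct t) D hPt hCt PPt PCt CPt (fun _ => erefl) n w x n0 w0 hw'.
  move=> hm; apply: (le_trans hm).
  set dd := opnorm _ in dd0 hm *.
  have nx := normr_ge0 x.
  have h1 : 0 <= n%:R / 2 * dd :> R by rewrite !mulr_ge0 ?invr_ge0 ?ler0n.
  have c0 : 0 <= n%:R / 2 :> R by rewrite mulr_ge0 ?invr_ge0 ?ler0n.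
  apply: (@le_trans _ _ (n%:R / 2 * expR w * dd * 1)).
    by apply: ler_wpM2l => //; rewrite !mulr_ge0 ?expR_ge0.
  rewrite mulr1; apply: ler_wpM2r => //; exact: ler_wpM2l.
have hdd : opnorm (fun x => D (D x)) <= (n%:R^-1 * w) ^+ 2.
  apply: opnorm_le => x hx.
  have h1 := @opnorm_bound _ _ D (D x) hDb.
  have h2 := @opnorm_bound _ _ D x hDb.
  have nx := normr_ge0 x.
  have nDx := normr_ge0 (D x).
  move: h1 h2 hw' hx a0; set a := opnorm D; set m := n%:R^-1 * w => h1 h2 hw' hx a0.
  have m0 : 0 <= m by rewrite /m mulr_ge0 // invr_ge0 ler0n.
  rewrite expr2; nra.
apply: (@le_trans _ _ (n%:R / 2 * expR (v + w) * (n%:R^-1 * w) ^+ 2)).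
  by apply: ler_wpM2l => //; rewrite !mulr_ge0 ?invr_ge0 ?ler0n.
rewrite le_eqVlt; apply/orP; left; apply/eqP.
field; by rewrite gt_eqF.
Qed.
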